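(* If $\mathsf{B}\in\mathbb{R}$ and $\alpha<\rho(\mathsf{B})$ is an ordinal, then there is an $\mathsf{A}\in\mathbb{R}$ such that $\mathsf{A}\le\mathsf{B}$ and $\rho(\mathsf{A})=\alpha$.
   Context: Standard generating sets: $\mathrm{Homeo}_+(I)$ acts on $I=[0,1]$ on the right. Support $\mathrm{supt}(f)=\{t:tf\ne t\}$; extended support = interior of its closure; orbitals = components of the support, endpoints = transition points; a bump has exactly one orbital, positive if $tf>t$ there, else negative. A marking assigns to each bump $b$ with support $(u,v)$ a point $s_b\in(u,v)$; feet of $b$: $(u,s_b)$ and $[t_b,v)$ with $t_b=s_bb$ ($b$ positive) or $s_bb^{-1}$ ($b$ negative). A marked function has finitely many bumps, each marked. A finite set of marked functions is fast if no bump occurs in two of its elements and distinct bumps have disjoint feet. A standard function is a marked function whose extended support is an interval, with all positive bumps right of all negative bumps, and #positive $-$ #negative bumps $\in\{0,1\}$. For standard $f,g$: $f\ll g$ iff extended supports disjoint with $f$'s to the left; $f\sqsubset g$ iff closure of extended support of $f$ lies in extended support of $g$; $f<g$ iff $f\ll g$ or $f\sqsubset g$. $f^\circ$: if $f$ has $>2$ orbitals, $f$ restricted to the union of its non-extreme orbitals; if $f$ has 1 or 2 orbitals and the left foot of its positive bump is $(r,s)$, a positive bump with support $(r,s)$. $(f,g)$ is a standard pair if $\{f,g\}$ is fast and either $f\ll g$ or ($f\sqsubset g$ and $(g^\circ,f)$ is a standard pair). $\mathcal{S}$ = finite sets of standard functions, pairwise $<$-comparable, each pair $f<g$ a standard pair.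 Oscillation $o(f,g)$ for $f<g$: number of orbitals of $g$ containing a transition point of $f$. Signatures: the signature of $A\in\mathcal S$ is $(f,g)\mapsto o(f,g)$ on pairs $f<g$; functions on pairs of finite linear orders are equivalent if an order-preserving bijection of bases carries one to the other; $\mathbb{S}$ = signatures of members of $\mathcal S$ up to equivalence. $\mathsf{0},\mathsf{1}$: base sizes $0,1$. $\mathsf{A}+\mathsf{B}$: base $A$ followed by $B$, agreeing with $\mathsf{A},\mathsf{B}$ on their bases, value $0$ across. $\exp(\mathsf{A})$: same base, values $\mathsf{A}(i,j)+1$. Inflation: for $\mathsf{A}$ with base $A$ and $m\in A$, $\mathsf{A}^m$ has base $A\cup\{i^m:i<m,\ \mathsf{A}(i,m)>0\}$, new elements placed above all elements of $A$ below $m$ and below $m$, $i^m<j^m$ iff $i<j$; for $i,j<m\le k$ (with $\mathsf{A}(m,m)=\infty$): $\mathsf{A}^m(i^m,j^m)=\mathsf{A}(i,j)$, $\mathsf{A}^m(i,j^m)=\min(\mathsf{A}(j,m)-1,\mathsf{A}(i,m))$, $\mathsf{A}^m(i^m,k)=\min(\mathsf{A}(i,m),\mathsf{A}(m,k))$, other values as in $\mathsf{A}$. $\mathsf{A}\le\mathsf{B}$ iff there is a sequence $\mathsf{B}_0=\mathsf{B},\dots,\mathsf{B}_n=\mathsf{A}$ with each $\mathsf{B}_{i+1}$ (equivalent to) a restriction to a subset of the base of an inflation of $\mathsf{B}_i$. $\mathbb{B}$: smallest class containing $\mathsf{0},\mathsf{1}$ with $\sum_{i<n}\exp(\mathsf{X}_i)\in\mathbb{B}$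 whenever all $\mathsf{X}_i\in\mathbb{B}$; each nonzero member is uniquely $\sum_{i<n}\exp(\mathsf{A}_i)$ with nonzero $\mathsf{A}_i\in\mathbb{B}$. $\rho(\mathsf{0})=0$, $\rho(\mathsf{1})=1$, $\rho(\exp(\mathsf{A}))=\omega^{-1+\rho(\mathsf{A})}$, $\rho(\sum_{i<n}\exp(\mathsf{A}_i))=\sum_{i<n}\rho(\exp(\mathsf{A}_i))$ (ordinal sum), where $-1+\alpha=\beta$ if $\alpha=1+\beta$ and $\omega^{-1+0}:=0$. $\mathbb{R}$: smallest subclass of $\mathbb{B}$ containing $\mathsf{0},\mathsf{1}$ with $\sum_{i<n}\exp(\mathsf{X}_i)\in\mathbb{R}$ whenever all $\mathsf{X}_i\in\mathbb{R}$ and $\rho(\mathsf{X}_{i+1})\le\rho(\mathsf{X}_i)$ for $i<n-1$. *)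

(* Defs.v *)
From mathcomp Require Import all_boot.
From Stdlib Require List.
Set Implicit Arguments.
Unset Strict Implicit.
Unset Printing Implicit Defensive.

(* Signatures.  A function on pairs of a finite linear order of size n *)
(* is represented with base {0,...,n-1} (every finite linear order is   *)
(* uniquely order-isomorphic to such an initial segment); only the      *)
(* values sv i j with i < j < sz matter.                                *)
Record Sig := MkSig { sz : nat; sv : nat -> nat -> nat }.

(* equivalence: an order-preserving bijection of bases carries one to   *)
(* the other (between initial segments such a bijection is the identity)*)
Definition sig_eq (A B : Sig) : Prop :=
  sz A = sz B /\ forall i j, i < j -> j < sz A -> sv A i j = sv B i j.

Definition sig0 : Sig := MkSig 0 (fun _ _ => 0).
Definition sig1 : Sig := MkSig 1 (fun _ _ => 0).

Definition sig_add (A B : Sig) : Sig :=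
  MkSig (sz A + sz B)
    (fun i j => if j < sz A then sv A i j
                else if sz A <= i then sv B (i - sz A) (j - sz A) else 0).

Definition sig_exp (A : Sig) : Sig := MkSig (sz A) (fun i j => (sv A i j).+1).

Definition sum_exp (Xs : seq Sig) : Sig :=
  foldr (fun X acc => sig_add (sig_exp X) acc) sig0 Xs.

Definition nonzero (A : Sig) : Prop := 0 < sz A.

(* Inflation A^m (for m < sz A).  The new elements i^m (i < m with     *)
(* A(i,m) > 0) are placed, in the order of i, just below m and above    *)
(* all old elements below m.                                           *)
Definition infl_new (A : Sig) (m : nat) : seq nat :=
  [seq i <- iota 0 m | 0 < sv A i m].

Inductive infl_pt := Old of nat | New of nat.

Definition infl_cls (A : Sig) (m q : nat) : infl_pt :=
  let p := size (infl_new A m) in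
  if q < m then Old q
  else if q < m + p then New (nth 0 (infl_new A m) (q - m))
  else Old (q - p).

Definition inflate (A : Sig) (m : nat) : Sig :=
  MkSig (sz A + size (infl_new A m))
    (fun q1 q2 =>
       match infl_cls A m q1, infl_cls A m q2 with
       | Old a, Old b => sv A a b
       | New i, New j => sv A i j
       | Old a, New j => minn (sv A j m - 1) (sv A a m)
       | New i, Old k => if k == m then sv A i m   (* A(m,m) = infinity *)
                         else minn (sv A i m) (sv A m k)
       end).

(* restriction to a subset of the base, given as an increasing list    *)
Definition restrict (A : Sig) (s : seq nat) : Sig :=
  MkSig (size s) (fun i j => sv A (nth 0 s i) (nth 0 s j)).

Definition valid_subset (A : Sig) (s : seq nat) : Prop :=
  sorted ltn s /\ all (fun x => x < sz A) s.

Definition sig_step (C B : Sig) : Prop :=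
  exists m s, m < sz B /\ valid_subset (inflate B m) s /\
              sig_eq C (restrict (inflate B m) s).

Inductive sig_le : Sig -> Sig -> Prop :=
  | sig_le_refl A B : sig_eq A B -> sig_le A B
  | sig_le_step A C B : sig_le A C -> sig_step C B -> sig_le A B.

(* Ordinals below epsilon_0 in Cantor normal form:                     *)
(* C [:: a1; ...; ak] denotes w^a1 + ... + w^ak  (a1 >= ... >= ak).     *)
Inductive cnf := C of seq cnf.

Fixpoint cmp (x y : cnf) {struct x} : comparison :=
  match x, y with
  | C l1, C l2 =>
    (fix cl (l1 l2 : seq cnf) : comparison :=
       match l1, l2 with
       | [::], [::] => Eq
       | [::], _ :: _ => Lt
       | _ :: _, [::] => Gt
       | a :: l1', b :: l2' =>
         match cmp a b with Eq => cl l1' l2' | c => c end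
       end) l1 l2
  end.

Definition olt (x y : cnf) : Prop := cmp x y = Lt.
Definition oge (x y : cnf) : bool := if cmp x y is Lt then false else true.

Fixpoint cnf_normal (x : cnf) : bool :=
  match x with
  | C l =>
    (fix alln (l : seq cnf) : bool :=
       match l with [::] => true | a :: l' => cnf_normal a && alln l' end) l
    && sorted oge l
  end.

Definition ozero : cnf := C [::].
Definition oone : cnf := C [:: ozero].

Definition oadd (x y : cnf) : cnf :=
  match x, y with
  | C l1, C l2 =>
    match l2 with
    | [::] => C l1
    | b :: _ => C ([seq a <- l1 | oge a b] ++ l2)
    end
  end.

(* -1 + alpha, for alpha >= 1 *)
Definition minus1plus (x : cnf) : cnf :=
  match x with
  | C (C [::] :: l') => C l'
  | _ => x
  end.

(* w^(-1 + alpha), with w^(-1+0) := 0 *)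
Definition omega_m1 (x : cnf) : cnf :=
  match x with
  | C [::] => ozero
  | _ => C [:: minus1plus x]
  end.

Definition osum (xs : seq cnf) : cnf := foldr oadd ozero xs.

(* rho on the class B, as its graph.  Its domain is exactly B (every   *)
(* member of B is 0, 1 or sum_{i<n} exp(A_i) with nonzero A_i in B),    *)
(* and it is single-valued by the unique decomposition of B.           *)
Inductive rho_rel : Sig -> cnf -> Prop :=
  | rho_0 A : sig_eq A sig0 -> rho_rel A ozero
  | rho_1 A : sig_eq A sig1 -> rho_rel A oone
  | rho_sum A (Xs : seq Sig) (bs : seq cnf) :
      List.Forall nonzero Xs ->
      List.Forall2 rho_rel Xs bs ->
      sig_eq A (sum_exp Xs) ->
      rho_rel A (osum (map omega_m1 bs)).

Definition inB (A : Sig) : Prop := exists a, rho_rel A a.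

Inductive inR : Sig -> Prop :=
  | R_0 A : sig_eq A sig0 -> inR A
  | R_1 A : sig_eq A sig1 -> inR A
  | R_sum A (Xs : seq Sig) (bs : seq cnf) :
      List.Forall inR Xs ->
      List.Forall2 rho_rel Xs bs ->
      sorted oge bs ->
      sig_eq A (sum_exp Xs) ->
      inR A.

(* Main.v *)
Require Import Defs.
From mathcomp Require Import all_boot.
From mathcomp Require Import zify.
Set Implicit Arguments.
Unset Strict Implicit.
Unset Printing Implicit Defensive.

Lemma sig_eq_refl A : sig_eq A A.
Proof. by split. Qed.

Lemma sig_eq_sym A B : sig_eq A B -> sig_eq B A.
Proof. case=> h e; split=> // i j ij jl; symmetry; apply: e => //; by rewrite h. Qed.

Lemma sig_eq_trans A B C : sig_eq A B -> sig_eq B C -> sig_eq A C.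
Proof.
case=> h e [h' e']; split; first by rewrite h.
move=> i j ij jl; rewrite e // e' // -h //.
Qed.

Lemma sig_add_eq A A' B B' :
  sig_eq A A' -> sig_eq B B' -> sig_eq (sig_add A B) (sig_add A' B').
Proof.
case=> hA eA [hB eB]; split; rewrite /= ?hA ?hB //.
move=> i j ij jl /=; rewrite -hA.
case: ifP => jA; first by apply: eA.
case: ifP => iA //; apply: eB; lia.
Qed.

Lemma sig_exp_eq A A' : sig_eq A A' -> sig_eq (sig_exp A) (sig_exp A').
Proof. case=> h e; split=> //= i j ij jl; by rewrite e. Qed.

Lemma sig_add_assoc A B C :
  sig_eq (sig_add (sig_add A B) C) (sig_add A (sig_add B C)).
Proof.
split; rewrite /= ?addnA //.
move=> i j ij jl /=.
by repeat case: ifP => ?; rewrite ?subnDA //; lia.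
Qed.

Lemma sig_add0l A : sig_eq (sig_add sig0 A) A.
Proof. split=> //= i j ij jl; by rewrite !subn0. Qed.

Lemma sig_add0r A : sig_eq (sig_add A sig0) A.
Proof. split=> /=; first by rewrite addn0. move=> i j ij jl; rewrite addn0 in jl; by rewrite jl. Qed.

Lemma sig_le_eqL A C B : sig_eq A C -> sig_le C B -> sig_le A B.
Proof.
move=> eAC H; elim: H A eAC => {C B}.
- move=> C B e A eA; apply: sig_le_refl; exact: sig_eq_trans eA e.
- move=> C D B _ IH st A eA; apply: sig_le_step (IH _ eA) st.
Qed.

Lemma sig_le_sz0 A C : sz C = 0 -> sig_le A C -> sig_eq A C.
Proof.
move=> h H; elim: H h => {A C}.
- by [].
- move=> A C B _ _ [m [s [mB _]]] h; by rewrite h in mB.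
Qed.

Lemma restrict_eq A A' s : sig_eq A A' -> valid_subset A s ->
  sig_eq (restrict A s) (restrict A' s).
Proof.
case=> h e [so al]; split=> //= i j ij jl; apply: e.
- have := sorted_ltn_nth (@ltn_trans) 0 so; move=> /(_ i j); apply => //.
  rewrite inE; lia.
- by apply: (all_nthP 0 al).
Qed.

Definition ival (B : Sig) (m : nat) (x y : infl_pt) : nat :=
  match x, y with
  | Old a, Old b => sv B a b
  | New i, New j => sv B i j
  | Old a, New j => minn (sv B j m - 1) (sv B a m)
  | New i, Old k => if k == m then sv B i m else minn (sv B i m) (sv B m k)
  end.

Lemma inflate_sv B m q1 q2 :
  sv (inflate B m) q1 q2 = ival B m (infl_cls B m q1) (infl_cls B m q2).
Proof. by []. Qed.

Definition key B m x :=
  match x with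
  | Old a => if a < m then a else a + size (infl_new B m)
  | New i => m + index i (infl_new B m)
  end.

Definition okpt B m x :=
  match x with
  | Old a => a < sz B
  | New i => i \in infl_new B m
  end.

Definition PS B m n (f : nat -> infl_pt) :=
  MkSig n (fun i j => ival B m (f i) (f j)).

Lemma sorted_of_nth (s : seq nat) :
  (forall i j, i < j -> j < size s -> nth 0 s i < nth 0 s j) -> sorted ltn s.
Proof.
elim: s => // x s IH H /=.
rewrite (path_sortedE ltn_trans); apply/andP; split.
  apply/(all_nthP 0) => k hk; exact: (H 0 k.+1).
apply: IH => i j ij js; exact: (H i.+1 j.+1).
Qed.

Lemma uniq_new B m : uniq (infl_new B m).
Proof. exact: filter_uniq (iota_uniq 0 m). Qed.

Lemma new_lt B m i : i \in infl_new B m -> i < m.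
Proof. by rewrite mem_filter mem_iota => /andP [_ /andP[_ h]]. Qed.

Lemma new_pos B m i : i \in infl_new B m -> 0 < sv B i m.
Proof. by rewrite mem_filter => /andP [h _]. Qed.

Lemma idx_lt B m i : i \in infl_new B m -> index i (infl_new B m) < size (infl_new B m).
Proof. by rewrite index_mem. Qed.

Lemma key_bound B m x : m < sz B -> okpt B m x ->
  key B m x < sz B + size (infl_new B m).
Proof.
case: x => [a|i] mB.
  rewrite /okpt /key => h; case: ifP => _; lia.
rewrite /okpt /key => h; have := idx_lt h; lia.
Qed.

Lemma cls_key B m x : okpt B m x -> infl_cls B m (key B m x) = x.
Proof.
case: x => [a|i]; rewrite /okpt /key => h.
  case: (ltnP a m) => am; rewrite /infl_cls.
    by rewrite am.
  rewrite ifF; last by lia.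
  rewrite ifF; last by lia.
  by rewrite addnK.
have hi := idx_lt h.
rewrite /infl_cls ifF; last by lia.
rewrite ifT; last by lia.
by rewrite addKn nth_index.
Qed.

Lemma idx_nth B m k : k < size (infl_new B m) ->
  index (nth 0 (infl_new B m) k) (infl_new B m) = k.
Proof. move=> h; exact: index_uniq h (uniq_new B m). Qed.

Lemma key_cls B m q : q < sz B + size (infl_new B m) ->
  key B m (infl_cls B m q) = q.
Proof.
rewrite /infl_cls => hq.
case: (ltnP q m) => qm; first by rewrite /key qm.
case: (ltnP q (m + size (infl_new B m))) => qp.
  rewrite /key idx_nth; lia.
rewrite /key ifF; lia.
Qed.

Lemma ok_cls B m q : m < sz B -> q < sz B + size (infl_new B m) ->
  okpt B m (infl_cls B m q).
Proof.
rewrite /infl_cls => mB hq.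
case: (ltnP q m) => qm; first by rewrite /okpt; lia.
case: (ltnP q (m + size (infl_new B m))) => qp.
  have h : q - m < size (infl_new B m) by lia.
  exact: mem_nth h.
rewrite /okpt; lia.
Qed.

Lemma master C B m n f : m < sz B ->
  (forall i, i < n -> okpt B m (f i)) ->
  (forall i j, i < j -> j < n -> key B m (f i) < key B m (f j)) ->
  sig_eq C (PS B m n f) -> sig_step C B.
Proof.
move=> mB ok inc [hC eC]; rewrite /= in hC.
exists m, (mkseq (fun i => key B m (f i)) n); split=> //; split; first split.
- apply: sorted_of_nth => i j ij; rewrite size_mkseq => jn.
  rewrite !nth_mkseq //; [exact: inc | lia].
- apply/(all_nthP 0) => i; rewrite size_mkseq => hi; rewrite nth_mkseq //.
  exact: key_bound mB (ok i hi).
- split; first by rewrite /= size_mkseq hC.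
  move=> i j ij jl; rewrite eC //= !nth_mkseq; try lia.
  by rewrite !cls_key //; apply: ok; lia.
Qed.

Lemma step_inv C B : sig_step C B -> exists m n f, m < sz B /\
  (forall i, i < n -> okpt B m (f i)) /\
  (forall i j, i < j -> j < n -> key B m (f i) < key B m (f j)) /\
  sig_eq C (PS B m n f).
Proof.
case=> m [s [mB [[so al] [hC eC]]]].
have hs : forall i, i < size s -> nth 0 s i < sz B + size (infl_new B m).
  by move=> i hi; apply: (all_nthP 0 al).
exists m, (size s), (fun i => infl_cls B m (nth 0 s i)); split=> //; split.
  by move=> i hi; apply: ok_cls => //; apply: hs.
split.
  move=> i j ij jn; rewrite !key_cls; try (apply: hs; lia).
  apply: (sorted_ltn_nth ltn_trans 0 so) => //; rewrite inE; lia.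
by split.
Qed.

Lemma restr_step C B n g : 0 < sz B ->
  (forall i, i < n -> g i < sz B) ->
  (forall i j, i < j -> j < n -> g i < g j) ->
  sig_eq C (MkSig n (fun i j => sv B (g i) (g j))) -> sig_step C B.
Proof.
move=> hB hg inc [hC eC].
apply: (@master C B 0 n (fun i => Old (g i))).
- exact: hB.
- by move=> i hi; rewrite /okpt; apply: hg.
- move=> i j ij jn; rewrite /key !ltn0 /= !addn0; exact: inc.
- by split.
Qed.

Lemma sig_le_trans A C B : sig_le A C -> sig_le C B -> sig_le A B.
Proof.
move=> H1 H2; elim: H2 A H1 => {C B}.
- move=> C B e A H1; case: (posnP (sz B)) => hB.
    have hC : sz C = 0 by case: e => ->.
    apply: sig_le_refl; apply: sig_eq_trans e; exact: sig_le_sz0 H1.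
  apply: sig_le_step H1 _.
  apply: (@restr_step C B (sz B) id) => //.
- move=> C D B _ IH st A H1; exact: sig_le_step (IH _ H1) st.
Qed.

Lemma sig_le_eqR A C B : sig_le A C -> sig_eq C B -> sig_le A B.
Proof. move=> H e; apply: sig_le_trans H (sig_le_refl e). Qed.

Lemma sig_le_0 X : sig_le sig0 X.
Proof.
case: (posnP (sz X)) => hX.
  by apply: sig_le_refl; split.
apply: sig_le_step (sig_le_refl (sig_eq_refl sig0)) _.
apply: (@restr_step sig0 X 0 id) => //; by split.
Qed.

Lemma sig_le_1 X : 0 < sz X -> sig_le sig1 X.
Proof.
move=> hX; apply: sig_le_step (sig_le_refl (sig_eq_refl sig1)) _.
apply: (@restr_step sig1 X 1 id).
- exact: hX.
- by move=> i; rewrite ltnS leqn0 => /eqP ->.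
- move=> i j ij jn; lia.
- split=> //= i j ij jl; lia.
Qed.

Lemma sv_addL B Q a b : b < sz B -> sv (sig_add B Q) a b = sv B a b.
Proof. by move=> h /=; rewrite h. Qed.

Lemma new_addL B Q m : m < sz B -> infl_new (sig_add B Q) m = infl_new B m.
Proof.
move=> mB; apply: eq_in_filter => i; rewrite mem_iota => /andP [_ h].
by rewrite sv_addL.
Qed.

Definition ptb B m (y : infl_pt) :=
  match y with Old b => b < sz B | New j => j < m end.

Lemma okpt_ptb B m y : okpt B m y -> ptb B m y.
Proof. case: y => [b|j] //=; exact: new_lt. Qed.

Lemma ival_addL B Q m x y : m < sz B -> ptb B m y ->
  ival (sig_add B Q) m x y = ival B m x y.
Proof.
move=> mB; case: x => [a|i]; case: y => [b|j]; rewrite /ptb /ival => h;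
  rewrite !sv_addL //; lia.
Qed.

Lemma key_addL B Q m x : m < sz B -> key (sig_add B Q) m x = key B m x.
Proof. by move=> mB; rewrite /key new_addL. Qed.

Lemma step_addL C B Q : sig_step C B -> sig_step (sig_add C Q) (sig_add B Q).
Proof.
case/step_inv => m [n [f [mB [ok [inc [hC eC]]]]]]; rewrite /= in hC.
pose f' i := if i < n then f i else Old (sz B + (i - n)).
apply: (@master _ _ m (n + sz Q) f').
- rewrite /=; lia.
- move=> i hi; rewrite /f'; case: ifP => hin.
    have := ok i hin; case: (f i) => [a|j] /=; first lia.
    by rewrite new_addL.
  rewrite /okpt /=; lia.
- move=> i j ij jn; rewrite /f' !key_addL //.
  case: ifP => hi; case: ifP => hj.
  + exact: inc.
  + have := key_bound mB (ok i hi); rewrite /key ifF; lia.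
  + lia.
  + rewrite /key !ifF; lia.
- split; first by rewrite /= hC.
  move=> i j ij jl /=; rewrite hC in jl *; rewrite /f'.
  case: ifP => hj.
    rewrite ifT; last by lia.
    rewrite ival_addL //; last exact: okpt_ptb (ok j hj).
    by rewrite eC //= hC.
  case: ifP => hi.
    have h1 : (sz B + (j - n) < sz B) = false by lia.
    have h2 : (sz B <= sz B + (i - n)) = true by lia.
    have h3 : (i < n) = false by lia.
    by rewrite h3 /ival /= h1 h2 !addKn.
  rewrite ifT; last by lia.
  have := ok i (ltac:(lia)); case: (f i) => [a|k] h; rewrite /okpt in h; rewrite /ival /=.
    simpl in h; rewrite ifF; last by lia.
    by rewrite ifF; lia.
  have hk := new_lt h.
  rewrite ifF; last by lia.
  rewrite ifT; last by lia.
  rewrite ifF; last by lia.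
  rewrite ifF; last by lia.
  by rewrite minn0.
Qed.

Lemma sv_addR P B a b : sv (sig_add P B) (sz P + a) (sz P + b) = sv B a b.
Proof.
rewrite /=.
have h1 : (sz P + b < sz P) = false by lia.
by rewrite h1 leq_addr !addKn.
Qed.

Lemma sv_addR0 P B a b : a < sz P -> sv (sig_add P B) a (sz P + b) = 0.
Proof.
move=> h; rewrite /=.
have h1 : (sz P + b < sz P) = false by lia.
have h2 : (sz P <= a) = false by lia.
by rewrite h1 h2.
Qed.

Lemma new_addR P B m :
  infl_new (sig_add P B) (sz P + m) = map (addn (sz P)) (infl_new B m).
Proof.
rewrite /infl_new iotaD filter_cat add0n.
have -> : [seq i <- iota 0 (sz P) | 0 < sv (sig_add P B) i (sz P + m)] = [::].
  apply/eqP; rewrite -[_ == _]negbK -has_filter; apply/hasPn => i.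
  rewrite mem_iota => hi; rewrite sv_addR0 //; lia.
rewrite cat0s (_ : iota (sz P) m = map (addn (sz P)) (iota 0 m)); last by rewrite -iotaDl addn0.
rewrite filter_map; congr map.
apply: eq_filter => j; exact: (congr1 (fun x => 0 < x) (sv_addR P B j m)).
Qed.

Definition shift k (x : infl_pt) :=
  match x with Old a => Old (k + a) | New j => New (k + j) end.

Lemma key_addR P B m x :
  key (sig_add P B) (sz P + m) (shift (sz P) x) = sz P + key B m x.
Proof.
rewrite /key new_addR size_map; case: x => [a|j] /=.
  rewrite ltn_add2l; case: ifP => _; lia.
rewrite index_map; last exact: addnI.
lia.
Qed.

Lemma key_addR0 P B m a : a < sz P -> key (sig_add P B) (sz P + m) (Old a) = a.
Proof. by move=> h; rewrite /key ifT //; lia. Qed.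

Lemma ival_addR P B m x y :
  ival (sig_add P B) (sz P + m) (shift (sz P) x) (shift (sz P) y) = ival B m x y.
Proof.
case: x => [a|i]; case: y => [b|j]; rewrite /shift /ival !sv_addR //.
by rewrite eqn_add2l.
Qed.

Lemma ival_addR0 P B m a y : a < sz P ->
  ival (sig_add P B) (sz P + m) (Old a) (shift (sz P) y) = 0.
Proof.
move=> h; case: y => [b|j]; rewrite /shift /ival.
  by rewrite sv_addR0.
by rewrite (@sv_addR0 P B a m) // minn0.
Qed.

Lemma step_addR C B P : sig_step C B -> sig_step (sig_add P C) (sig_add P B).
Proof.
case/step_inv => m [n [f [mB [ok [inc [hC eC]]]]]]; rewrite /= in hC.
pose f' i := if i < sz P then Old i else shift (sz P) (f (i - sz P)).
apply: (@master _ _ (sz P + m) (sz P + n) f').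
- rewrite /=; lia.
- move=> i hi; rewrite /f'; case: ifP => hin.
    rewrite /okpt /=; lia.
  have := ok (i - sz P) (ltac:(lia)); case: (f (i - sz P)) => [a|j] h.
    simpl in h; rewrite /okpt /=; lia.
  rewrite /okpt /= new_addR mem_map //; exact: addnI.
- move=> i j ij jn; rewrite /f'.
  case: ifP => hi; case: ifP => hj.
  + rewrite !key_addR0 //.
  + rewrite key_addR0 // key_addR; lia.
  + lia.
  + rewrite !key_addR ltn_add2l; apply: inc; lia.
- split; first by rewrite /= hC.
  move=> i j ij jl /=; rewrite /f'.
  case: ifP => hj.
    rewrite ifT; last by lia.
    by rewrite /ival /= hj.
  case: (leqP (sz P) i) => hi.
    rewrite ival_addR eC //=; move: jl; rewrite /= hC; lia.
  by rewrite ival_addR0.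
Qed.

Lemma index_iota0 i m : i < m -> index i (iota 0 m) = i.
Proof.
move=> h; have := @index_uniq _ 0 i (iota 0 m); rewrite size_iota nth_iota //.
by rewrite add0n => ->; rewrite ?iota_uniq.
Qed.

Lemma new_exp B m : infl_new (sig_exp B) m = iota 0 m.
Proof. by apply/all_filterP; apply/allP. Qed.



Lemma sorted_new B m : sorted ltn (infl_new B m).
Proof. apply: sorted_filter; [exact: ltn_trans | exact: iota_ltn_sorted]. Qed.

Lemma new_idx_mono B m i j : i \in infl_new B m -> j \in infl_new B m ->
  index i (infl_new B m) < index j (infl_new B m) -> i < j.
Proof.
move=> hi hj h.
have := sorted_ltn_nth ltn_trans 0 (sorted_new B m).
move=> /(_ (index i (infl_new B m)) (index j (infl_new B m))).
rewrite !inE !nth_index //; apply => //; exact: idx_lt.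
Qed.

Lemma key_mono_exp B m x y : okpt B m x -> okpt B m y ->
  key B m x < key B m y -> key (sig_exp B) m x < key (sig_exp B) m y.
Proof.
rewrite /key new_exp size_iota.
case: x => [a|i]; case: y => [b|j]; rewrite /okpt => hx hy.
- by case: ifP => ?; case: ifP => ?; lia.
- have := idx_lt hy; have hj := new_lt hy.
  rewrite index_iota0 //.
  by case: ifP => ?; lia.
- have := idx_lt hx; have hi := new_lt hx.
  rewrite index_iota0 //.
  by case: ifP => ?; lia.
- have hi := new_lt hx; have hj := new_lt hy.
  rewrite !index_iota0 // => h.
  have := @new_idx_mono B m i j hx hy; lia.
Qed.

Lemma ival_exp B m x y : okpt B m y ->
  ival (sig_exp B) m x y = (ival B m x y).+1.
Proof.
case: x => [a|i]; case: y => [b|j]; rewrite /okpt /ival /= => h //.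
- have := new_pos h; case: (sv B j m) => // k _.
  by rewrite !subn1 /= minnSS.
- by case: eqP => // _; rewrite minnSS.
Qed.

Lemma step_exp C B : sig_step C B -> sig_step (sig_exp C) (sig_exp B).
Proof.
case/step_inv => m [n [f [mB [ok [inc [hC eC]]]]]]; rewrite /= in hC.
apply: (@master _ _ m n f).
- exact: mB.
- move=> i hi; have := ok i hi; case: (f i) => [a|j] //.
  rewrite /okpt new_exp mem_iota => h; have := new_lt h; lia.
- move=> i j ij jn; apply: key_mono_exp; [apply: ok; lia | apply: ok; lia| exact: inc].
- split; first by rewrite /= hC.
  move=> i j ij jl; rewrite /= in jl; rewrite /= ival_exp; last by apply: ok; lia.
  by rewrite eC.
Qed.

Definition top_ext (Y : Sig) : Sig :=
  MkSig (sz Y).+1 (fun i j => if j == sz Y then 1 else sv Y i j).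

Lemma top_ext_eq A A' : sig_eq A A' -> sig_eq (top_ext A) (top_ext A').
Proof.
case=> h e; split; first by rewrite /= h.
move=> i j ij jl /=; rewrite h; case: eqP => // hj.
apply: e => //; rewrite /= in jl; lia.
Qed.

Lemma new_top Y : infl_new (top_ext Y) (sz Y) = iota 0 (sz Y).
Proof. by apply/all_filterP; apply/allP => i _ /=; rewrite eqxx. Qed.

Lemma double_step Y : sig_step (top_ext (sig_add Y Y)) (top_ext Y).
Proof.
pose f i := if i < sz Y then Old i else if i < sz Y + sz Y then New (i - sz Y)
            else Old (sz Y).
have kf : forall i, i <= sz Y + sz Y -> key (top_ext Y) (sz Y) (f i) = i.
  move=> i hi; rewrite /f /key new_top size_iota.
  case: ifP => h1; first by rewrite h1.
  case: ifP => h2; first by rewrite index_iota0; lia.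
  rewrite ltnn; lia.
apply: (@master _ _ (sz Y) (sz Y + sz Y).+1 f).
- by [].
- move=> i hi; rewrite /f /okpt; case: ifP => h1; first by rewrite /=; lia.
  case: ifP => h2; first by rewrite new_top mem_iota; lia.
  by [].
- move=> i j ij jn; rewrite !kf; lia.
- split=> //= i j ij jl; rewrite /f.
  case: (ltnP j (sz Y)) => hj.
    rewrite ifF; last by lia.
    rewrite ifT; last by lia.
    by rewrite /ival /= ifF; lia.
  case: (ltnP j (sz Y + sz Y)) => hj2.
    rewrite ifF; last by lia.
    case: (ltnP i (sz Y)) => hi.
      by rewrite /ival /= !eqxx.
    rewrite ifT; last by lia.
    by rewrite /ival /= ifF; lia.
  have -> : j = sz Y + sz Y by lia.
  rewrite eqxx.
  case: (ltnP i (sz Y)) => hi.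
    by rewrite /ival /= eqxx.
  rewrite ifT; last by lia.
  by rewrite /ival /= eqxx.
Qed.

Lemma exp_top W : sig_eq (sig_exp (sig_add W sig1)) (top_ext (sig_exp W)).
Proof.
split; first by rewrite /= addn1.
move=> i j ij jl /=; rewrite /= addn1 in jl.
case: (ltnP j (sz W)) => hj.
  by rewrite ifF //; lia.
have -> : j = sz W by lia.
rewrite eqxx; case: ifP => //.
Qed.

Lemma le_addL A B Q : sig_le A B -> sig_le (sig_add A Q) (sig_add B Q).
Proof.
elim=> {A B}.
- move=> A B e; apply: sig_le_refl; exact: sig_add_eq e (sig_eq_refl Q).
- move=> A C B _ IH st; apply: sig_le_step IH (step_addL Q st).
Qed.

Lemma le_addR A B P : sig_le A B -> sig_le (sig_add P A) (sig_add P B).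
Proof.
elim=> {A B}.
- move=> A B e; apply: sig_le_refl; exact: sig_add_eq (sig_eq_refl P) e.
- move=> A C B _ IH st; apply: sig_le_step IH (step_addR P st).
Qed.

Lemma le_add2 A B C D : sig_le A B -> sig_le C D ->
  sig_le (sig_add A C) (sig_add B D).
Proof.
move=> h1 h2; apply: sig_le_trans (le_addL C h1) (le_addR B h2).
Qed.

Lemma le_exp A B : sig_le A B -> sig_le (sig_exp A) (sig_exp B).
Proof.
elim=> {A B}.
- move=> A B e; apply: sig_le_refl; exact: sig_exp_eq e.
- move=> A C B _ IH st; apply: sig_le_step IH (step_exp st).
Qed.

Lemma le_top Y : sig_le Y (top_ext Y).
Proof.
apply: sig_le_step (sig_le_refl (sig_eq_refl Y)) _.
apply: (@restr_step Y (top_ext Y) (sz Y) id).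
- by [].
- move=> i hi /=; lia.
- by [].
- split=> //= i j ij jl; rewrite ifF //; lia.
Qed.

Lemma le_dropL A B : sig_le B (sig_add A B).
Proof.
apply: sig_le_eqL (sig_eq_sym (sig_add0l B)) _.
apply: le_addL; exact: sig_le_0.
Qed.

Lemma le_dropR A B : sig_le A (sig_add A B).
Proof.
apply: sig_le_eqL (sig_eq_sym (sig_add0r A)) _.
apply: le_addR; exact: sig_le_0.
Qed.

Definition sumB (l : seq Sig) := foldr sig_add sig0 l.

Lemma sum_expE Xs : sum_exp Xs = sumB (map sig_exp Xs).
Proof. by rewrite /sumB foldr_map. Qed.

Lemma sumB_cat l1 l2 : sig_eq (sumB (l1 ++ l2)) (sig_add (sumB l1) (sumB l2)).
Proof.
elim: l1 => [|x l1 IH] /=.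
  exact: sig_eq_sym (sig_add0l _).
apply: sig_eq_trans (sig_add_eq (sig_eq_refl x) IH) _.
exact: sig_eq_sym (sig_add_assoc _ _ _).
Qed.

Lemma sumB_le2 l1 l2 : List.Forall2 sig_le l1 l2 -> sig_le (sumB l1) (sumB l2).
Proof.
elim=> [|x y l1' l2' hxy _ IH] /=.
  exact: sig_le_refl (sig_eq_refl _).
exact: le_add2.
Qed.

Lemma sumB_prefix l1 l2 : sig_le (sumB l1) (sumB (l1 ++ l2)).
Proof.
apply: sig_le_eqR (le_dropR _ (sumB l2)) (sig_eq_sym (sumB_cat l1 l2)).
Qed.

Lemma sumB_filter (p : pred Sig) l : sig_le (sumB (filter p l)) (sumB l).
Proof.
elim: l => [|x l IH] /=.
  exact: sig_le_refl (sig_eq_refl _).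
case: (p x) => /=.
  exact: le_addR.
exact: sig_le_trans IH (le_dropL _ _).
Qed.

Lemma copies_top W t :
  sig_le (top_ext (sumB (nseq (2 ^ t) (sig_exp W)))) (sig_exp (sig_add W sig1)).
Proof.
elim: t => [|t IH].
  apply: sig_le_refl; rewrite expn0 /=.
  apply: sig_eq_trans (top_ext_eq (sig_add0r _)) _.
  exact: sig_eq_sym (exp_top W).
apply: sig_le_trans IH.
rewrite expnS mul2n -addnn nseqD.
apply: sig_le_eqL (top_ext_eq (sumB_cat _ _)) _.
apply: sig_le_step (sig_le_refl (sig_eq_refl _)) _.
exact: double_step.
Qed.

Lemma copies_le W r :
  sig_le (sumB (nseq r (sig_exp W))) (sig_exp (sig_add W sig1)).
Proof.
have hr : r <= 2 ^ r by apply: ltnW; apply: ltn_expl.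
apply: sig_le_trans _ (sig_le_trans (le_top _) (copies_top W r)).
rewrite -(subnKC hr) nseqD; exact: sumB_prefix.
Qed.

Fixpoint allP (P : cnf -> Prop) (l : seq cnf) : Prop :=
  match l with [::] => True | x :: l' => P x /\ allP P l' end.

Definition cnf_ind2 (P : cnf -> Prop) (H : forall l, allP P l -> P (C l)) :
  forall x, P x :=
  fix F x := match x with
  | C l => H l ((fix G (l : seq cnf) : allP P l :=
                  match l return allP P l with
                  | [::] => I
                  | y :: l' => conj (F y) (G l')
                  end) l)
  end.

Fixpoint cl (l1 l2 : seq cnf) : comparison :=
  match l1, l2 with
  | [::], [::] => Eq
  | [::], _ :: _ => Lt
  | _ :: _, [::] => Gt
  | a :: l1', b :: l2' =>
    match cmp a b with Eq => cl l1' l2' | c => c end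
  end.

Lemma cmpC l1 l2 : cmp (C l1) (C l2) = cl l1 l2.
Proof.
by elim: l1 l2 => [|a l1 IH] [|b l2] //=; try (case: (cmp a b) => //; exact: IH).
Qed.

Lemma cmp_refl x : cmp x x = Eq.
Proof.
elim/cnf_ind2: x => l IH; rewrite cmpC.
elim: l IH => [|a l IHl] //= [-> h]; exact: IHl.
Qed.

Lemma cmp_eq x y : cmp x y = Eq -> x = y.
Proof.
elim/cnf_ind2: x y => l1 IH [l2]; rewrite cmpC.
elim: l1 IH l2 => [|a l1 IHl] IH [|b l2] //=.
case: IH => ha hl.
case E: (cmp a b) => // h.
have -> := ha _ E.
by case: (IHl hl l2 h) => ->.
Qed.

Lemma cmp_opp x y : cmp y x = CompOpp (cmp x y).
Proof.
elim/cnf_ind2: x y => l1 IH [l2]; rewrite !cmpC.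
elim: l1 IH l2 => [|a l1 IHl] IH [|b l2] //=.
case: IH => ha hl.
rewrite (ha b); case: (cmp a b) => //=; exact: IHl.
Qed.

Lemma cmp_trans x y z : cmp x y = Lt -> cmp y z = Lt -> cmp x z = Lt.
Proof.
elim/cnf_ind2: x y z => l1 IH [l2] [l3]; rewrite !cmpC.
elim: l1 IH l2 l3 => [|a l1 IHl] IH [|b l2] [|c l3] //=.
case: IH => ha hl.
case E1: (cmp a b) => //; case E2: (cmp b c) => //.
- move=> h1 h2; rewrite (cmp_eq E1) (cmp_eq E2) cmp_refl; exact: IHl h1 h2.
- by move=> _ _; rewrite (cmp_eq E1) E2.
- by move=> _ _; rewrite -(cmp_eq E2) E1.
- by move=> _ _; rewrite (ha _ _ E1 E2).
Qed.

Lemma oge_trans : transitive oge.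
Proof.
move=> y x z; rewrite /oge.
case E1: (cmp x y) => //; case E2: (cmp y z) => //; case E3: (cmp x z) => //.
- by rewrite (cmp_eq E1) E2 in E3.
- by rewrite (cmp_eq E1) E2 in E3.
- by rewrite -(cmp_eq E2) E1 in E3.
- have : cmp y x = Lt by rewrite cmp_opp E1.
  move=> h; by rewrite (cmp_trans h E3) in E2.
Qed.

Lemma normalC l : cnf_normal (C l) = all cnf_normal l && sorted oge l.
Proof. rewrite /=; congr andb; by elim: l => //= x l ->. Qed.

Lemma oge0 x : oge x ozero.
Proof. by case: x => [[|y l]]. Qed.

Lemma cmp0 x : x <> ozero -> cmp ozero x = Lt.
Proof. by case: x => [[|y l]]. Qed.

Lemma cmp_x0 x : cmp x ozero <> Lt.
Proof. by case: x => [[|y l]]. Qed.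

Lemma cmp_x0_ngt x : cmp x ozero <> Gt -> x = ozero.
Proof. by case: x => [[|y l]]. Qed.

Fixpoint Xf (x : cnf) : Sig :=
  match x with
  | C l =>
    match l with
    | [::] => sig1
    | C [::] :: _ => sig_add (sig_exp sig1) (sum_exp (map Xf l))
    | _ => sum_exp (map Xf l)
    end
  end.

Definition S (x : cnf) : Sig := match x with C l => sum_exp (map Xf l) end.

Definition one_plus (x : cnf) : cnf :=
  match x with
  | C l =>
    match l with
    | [::] => C [:: ozero]
    | C [::] :: _ => C (ozero :: l)
    | _ => C l
    end
  end.

Definition app0 (x : cnf) : cnf := match x with C l => C (l ++ [:: ozero]) end.

Fixpoint h (x : cnf) : nat := match x with C l => (foldr maxn 0 (map h l)).+1 end.

Lemma foldr_maxn a s : foldr maxn a s = maxn a (foldr maxn 0 s).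
Proof.
elim: s => [|x s IH] /=; first by rewrite maxn0.
by rewrite IH maxnCA.
Qed.

Lemma h_in x l : List.In x l -> h x < h (C l).
Proof.
elim: l => [|y l IH] //= [->|hin].
  rewrite ltnS; exact: leq_maxl.
have := IH hin; rewrite /= ltnS => hh; rewrite ltnS.
apply: leq_trans hh _; exact: leq_maxr.
Qed.

Lemma h_pos x : 0 < h x.
Proof. by case: x. Qed.

Lemma h_nz x : x <> ozero -> 1 < h x.
Proof.
case: x => [[|y l]] // _ /=; rewrite ltnS.
apply: leq_trans (h_pos y) _; exact: leq_maxl.
Qed.

Lemma h_one_plus x : h (one_plus x) <= maxn (h x) 2.
Proof.
case: x => [[|[[|z lz]] l]] /=; lia.
Qed.

Lemma h_app0 y : h (app0 y) <= maxn (h y) 2.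
Proof.
case: y => l /=; rewrite map_cat foldr_cat /= foldr_maxn; lia.
Qed.

Lemma cmp00 : cmp ozero ozero = Eq.
Proof. by []. Qed.

Lemma cmp0_ngt x : cmp ozero x <> Gt.
Proof. by case: x => [[|y l]]. Qed.

Lemma lexapp la le : cl la le = Lt -> cl (la ++ [:: ozero]) le <> Gt.
Proof.
elim: la le => [|a la IH] [|b le] //=.
  by move=> _; case: b => [[|? ?]]; case: le.
case: (cmp a b) => //; exact: IH.
Qed.

Lemma lex_split la lb : cl la lb <> Gt ->
  (exists r, lb = la ++ r) \/
  (exists pre a e ra rb, la = pre ++ a :: ra /\ lb = pre ++ e :: rb /\ cmp a e = Lt).
Proof.
elim: la lb => [|a la IH] lb.
  by move=> _; left; exists lb.
case: lb => [|b lb] //=.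
case E: (cmp a b) => // h.
- have eab := cmp_eq E; subst b.
  case: (IH lb h) => [[r ->]|[pre [a' [e [ra [rb [h1 [h2 h3]]]]]]]].
    by left; exists r.
  right; exists (a :: pre), a', e, ra, rb; by rewrite h1 h2.
- by right; exists [::], a, b, la, lb.
Qed.

Lemma app0_lt a e : cmp a e = Lt -> cmp (app0 (one_plus a)) (one_plus e) <> Gt.
Proof.
case: a => la; case: e => le; rewrite cmpC.
case: le => [|x le']; first by case: la.
case: x => [[|z lz]].
  case: la => [|y la'].
    by move=> _ /=; case: le'.
  case: y => [[|w lw]] //=.
  move=> H; exact: lexapp H.
case: la => [|y la'].
  by move=> _.
case: y => [[|w lw]] H.
  by [].
exact: (lexapp H).
Qed.

Lemma op_mono x y : cmp x y <> Gt -> cmp (one_plus x) (one_plus y) <> Gt.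
Proof.
case: x => lx; case: y => ly; rewrite cmpC.
case: ly => [|w ly'].
  by case: lx => // _; rewrite cmp_refl.
case: w => [[|z lz]].
  case: lx => [|y lx'].
    by move=> _ /=; case: ly'.
  move=> H; have : cmp y ozero <> Gt by move: H => /=; case: (cmp y ozero).
  move=> /cmp_x0_ngt hy; subst y.
  by [].
case: lx => [|y lx'].
  by move=> _.
case: y => [[|v lv]] H.
  by [].
by rewrite cmpC.
Qed.

Lemma normal_one_plus x : cnf_normal x -> cnf_normal (one_plus x).
Proof.
case: x => l.
by case: l => [|[[|z lz]] l] // H.
Qed.

Lemma normal_app0 y : cnf_normal y -> cnf_normal (app0 y).
Proof.
case: y => l; rewrite /app0 !normalC => /andP [h1 h2].
rewrite all_cat h1 /=.
case: l h2 {h1} => // x l h2 /=.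
move: h2 => /= h2; by rewrite cat_path h2 /= oge0.
Qed.

Lemma sig1_eq : sig_eq (sig_add (sig_exp sig1) sig0) sig1.
Proof. split=> //= i j ij jl; lia. Qed.

Lemma Xf_S x : sig_eq (Xf x) (S (one_plus x)).
Proof.
case: x => [[|[[|z lz]] l]] /=.
- exact: sig_eq_sym sig1_eq.
- exact: sig_eq_refl.
- exact: sig_eq_refl.
Qed.

Lemma S_cat l1 l2 : sig_eq (S (C (l1 ++ l2))) (sig_add (S (C l1)) (S (C l2))).
Proof. by rewrite /S !sum_expE !map_cat; exact: sumB_cat. Qed.

Lemma S_app0 y : sig_eq (S (app0 y)) (sig_add (S y) sig1).
Proof.
case: y => l; rewrite /app0.
apply: sig_eq_trans (S_cat _ _) _.
apply: sig_add_eq (sig_eq_refl _) _; exact: sig1_eq.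
Qed.

Lemma all_In (T : Type) (p : pred T) l x : all p l -> List.In x l -> p x.
Proof. elim: l => //= y l IH /andP [hy hl] [<-|hx] //; exact: IH. Qed.

Lemma sorted_suffix (T : Type) (r : rel T) l1 l2 : sorted r (l1 ++ l2) -> sorted r l2.
Proof. elim: l1 => //= x l1 IH h; apply: IH; exact: path_sorted h. Qed.

Lemma forall2_copies l W : (forall x, List.In x l -> sig_le (Xf x) W) ->
  List.Forall2 sig_le (map sig_exp (map Xf l)) (nseq (size l) (sig_exp W)).
Proof.
elim: l => [|x l IH] H /=; first by constructor.
constructor; first by apply: le_exp; apply: H; left.
by apply: IH => y hy; apply: H; right.
Qed.

Lemma block a ra e rb :
  (forall x, List.In x (a :: ra) -> sig_le (Xf x) (Xf a)) ->
  sig_le (sig_add (Xf a) sig1) (Xf e) ->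
  sig_le (S (C (a :: ra))) (S (C (e :: rb))).
Proof.
move=> H1 H2; rewrite /S sum_expE.
apply: sig_le_trans (sumB_le2 (forall2_copies H1)) _.
apply: sig_le_trans (copies_le _ _) _.
rewrite [sum_exp _]/=.
apply: sig_le_trans (le_exp H2) _.
exact: le_dropR.
Qed.

Lemma mono n : forall a b, h a <= n -> h b <= n -> cnf_normal a ->
  cmp a b <> Gt -> sig_le (S a) (S b).
Proof.
elim: n => [|n IH] a b ha hb na ab.
  have := h_pos a; lia.
case: a ha na ab => la ha na; case: b hb => lb hb; rewrite cmpC => ab.
case: (lex_split ab) => [[r ->]|[pre [a [e [ra [rb [Ela [Elb ae]]]]]]]].
  apply: sig_le_eqR (le_dropR _ _) (sig_eq_sym (S_cat _ _)).
have enz : e <> ozero by move=> E; subst e; exact: (cmp_x0 ae).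
have he : h e < h (C lb).
  by apply: h_in; rewrite Elb; apply: List.in_or_app; right; left.
have he2 := h_nz enz.
have n2 : 2 <= n by lia.
move: na; rewrite normalC => /andP [nall nsort].
have hin : forall x, List.In x (a :: ra) -> List.In x la.
  by move=> x hx; rewrite Ela; apply: List.in_or_app; right.
have hx : forall x, List.In x (a :: ra) -> h x <= n.
  by move=> x /hin /h_in; lia.
have nx : forall x, List.In x (a :: ra) -> cnf_normal x.
  by move=> x /hin; apply: all_In nall.
rewrite Ela Elb.
apply: sig_le_eqL (S_cat pre (a :: ra)) _.
apply: sig_le_eqR _ (sig_eq_sym (S_cat pre (e :: rb))).
apply: le_addR; apply: block.
- move=> x hxin.
  apply: sig_le_eqL (Xf_S x) _.
  apply: sig_le_eqR _ (sig_eq_sym (Xf_S a)).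
  apply: IH.
  + have := h_one_plus x; have := hx x hxin; lia.
  + have := h_one_plus a; have := hx a (or_introl erefl); lia.
  + exact: normal_one_plus (nx x hxin).
  + apply: op_mono.
    case: hxin => [<-|hxr]; first by rewrite cmp_refl.
    have hs : sorted oge (a :: ra) by apply: (@sorted_suffix _ _ pre); rewrite -Ela.
    have := all_In (order_path_min oge_trans hs) hxr.
    rewrite /oge (cmp_opp a x); by case: (cmp a x).
- apply: sig_le_eqL (sig_add_eq (Xf_S a) (sig_eq_refl sig1)) _.
  apply: sig_le_eqL (sig_eq_sym (S_app0 _)) _.
  apply: sig_le_eqR _ (sig_eq_sym (Xf_S e)).
  apply: IH.
  + have := h_app0 (one_plus a); have := h_one_plus a;
    have := hx a (or_introl erefl); lia.
  + have := h_one_plus e; lia.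
  + apply: normal_app0; apply: normal_one_plus; apply: nx; by left.
  + exact: app0_lt ae.
Qed.

Definition rho_ind2 (P : Sig -> cnf -> Prop)
  (H0 : forall A, sig_eq A sig0 -> P A ozero)
  (H1 : forall A, sig_eq A sig1 -> P A oone)
  (Hs : forall A Xs bs, List.Forall nonzero Xs ->
        List.Forall2 (fun X b => rho_rel X b /\ P X b) Xs bs ->
        sig_eq A (sum_exp Xs) -> P A (osum (map omega_m1 bs))) :
  forall A b, rho_rel A b -> P A b :=
  fix F A b (H : rho_rel A b) {struct H} : P A b :=
  match H in rho_rel A b return P A b with
  | rho_0 A h => H0 A h
  | rho_1 A h => H1 A h
  | rho_sum A Xs bs hn hf he => Hs A Xs bs hn
      ((fix G Xs bs (hf : List.Forall2 rho_rel Xs bs) {struct hf} :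
           List.Forall2 (fun X b => rho_rel X b /\ P X b) Xs bs :=
         match hf in List.Forall2 _ Xs bs
           return List.Forall2 (fun X b => rho_rel X b /\ P X b) Xs bs with
         | List.Forall2_nil => List.Forall2_nil _
         | List.Forall2_cons X b Xs' bs' hx hr =>
             @List.Forall2_cons _ _ (fun X b => rho_rel X b /\ P X b)
               X b Xs' bs' (conj hx (F X b hx)) (G Xs' bs' hr)
         end) Xs bs hf) he
  end.

Lemma S_filter (p : pred cnf) l : sig_le (S (C (filter p l))) (S (C l)).
Proof.
elim: l => [|x l IH] /=.
  exact: sig_le_refl (sig_eq_refl _).
case: (p x).
  exact: le_addR IH.
exact: sig_le_trans IH (le_dropL _ _).
Qed.

Lemma S_oadd x y : sig_le (S (oadd x y)) (sig_add (S x) (S y)).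
Proof.
case: x => l1; case: y => [[|b l2]].
  exact: sig_le_refl (sig_eq_sym (sig_add0r _)).
rewrite /oadd.
apply: sig_le_eqL (S_cat _ _) _.
apply: le_addL; exact: S_filter.
Qed.

Lemma Xf_m1 b : b <> ozero -> sig_le (Xf (minus1plus b)) (S b).
Proof.
case: b => [[|x l]] // _.
case: x => [[|z lz]].
  case: l => [|[[|w lw]] l] /=.
  - by apply: sig_le_1.
  - exact: sig_le_refl (sig_eq_refl _).
  - exact: le_dropL.
exact: sig_le_refl (sig_eq_refl _).
Qed.

Lemma S_omega b X : 0 < sz X -> sig_le (S b) X ->
  sig_le (S (omega_m1 b)) (sig_exp X).
Proof.
move=> hX hb.
case E: b => [[|x l]].
  exact: sig_le_0.
rewrite /omega_m1 -E /S /= .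
apply: sig_le_eqL (sig_add0r _) _.
apply: le_exp.
apply: sig_le_trans hb; apply: Xf_m1; by rewrite E.
Qed.

Lemma sum_claim Xs bs : List.Forall nonzero Xs ->
  List.Forall2 (fun X b => rho_rel X b /\ sig_le (S b) X) Xs bs ->
  sig_le (S (osum (map omega_m1 bs))) (sum_exp Xs).
Proof.
move=> hn hf; elim: hf hn => [|X b Xs' bs' [_ hx] _ IH] hn /=.
  exact: sig_le_refl (sig_eq_refl _).
inversion hn as [|X0 Xs0 hX hXs]; subst.
apply: sig_le_trans (S_oadd _ _) _.
apply: le_add2; last exact: IH.
exact: S_omega.
Qed.

Lemma claim B beta : rho_rel B beta -> sig_le (S beta) B.
Proof.
move=> H; elim/rho_ind2: H => {B beta}.
- move=> A e; exact: sig_le_0.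
- move=> A e; apply: sig_le_refl.
  apply: sig_eq_trans sig1_eq (sig_eq_sym e).
- move=> A Xs bs hn hf he.
  apply: sig_le_eqR (sum_claim hn hf) (sig_eq_sym he).
Qed.

Lemma omega_op e : omega_m1 (one_plus e) = C [:: e].
Proof. by case: e => [[|[[|z lz]] l]]. Qed.

Lemma osum_op l : sorted oge l -> osum (map omega_m1 (map one_plus l)) = C l.
Proof.
elim: l => [|x l IH] //= hs.
rewrite omega_op IH; last exact: path_sorted hs.
case: l hs {IH} => [|y l] //= /andP [hxy _].
by rewrite hxy.
Qed.

Lemma Xf_nz x : 0 < sz (Xf x).
Proof.
elim/cnf_ind2: x => l IH.
case: l IH => [|[[|z lz]] l] //= [h1 _].
rewrite /= in h1; lia.
Qed.

Lemma path_op x l : path oge x l -> path oge (one_plus x) (map one_plus l).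
Proof.
elim: l x => [|y l IH] x //= /andP [hxy hp].
rewrite IH // andbT.
have : cmp y x <> Gt by move: hxy; rewrite /oge (cmp_opp y x); case: (cmp y x).
move/op_mono; rewrite /oge (cmp_opp (one_plus x)).
by case: (cmp (one_plus x) (one_plus y)).
Qed.

Lemma G l : sorted oge l ->
  allP (fun e => rho_rel (Xf e) (one_plus e) /\ inR (Xf e)) l ->
  rho_rel (S (C l)) (C l) /\ inR (S (C l)).
Proof.
move=> hs ha.
have hf : List.Forall2 rho_rel (map Xf l) (map one_plus l).
  by elim: l {hs} ha => [|x l IH] /= => [_|[[h1 _] h2]]; constructor; auto.
have hn : List.Forall nonzero (map Xf l).
  by elim: l {hs ha hf} => [|x l IH] /=; constructor => //; exact: Xf_nz.
have hr : List.Forall inR (map Xf l).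
  by elim: l {hs hf hn} ha => [|x l IH] /= => [_|[[_ h1] h2]]; constructor; auto.
split.
  rewrite -{2}(osum_op hs).
  by apply: rho_sum hn hf (sig_eq_refl _).
apply: (R_sum hr hf) (sig_eq_refl _).
case: l hs {ha hf hn hr} => //= x l; exact: path_op.
Qed.

Lemma RS x : cnf_normal x ->
  (rho_rel (Xf x) (one_plus x) /\ inR (Xf x)) /\
  (rho_rel (S x) x /\ inR (S x)).
Proof.
elim/cnf_ind2: x => l IH; rewrite normalC => /andP [hn hs].
have ha : allP (fun e => rho_rel (Xf e) (one_plus e) /\ inR (Xf e)) l.
  elim: l IH hn {hs} => [|x l IHl] //= [hx hl] /andP [nx nl].
  split; [exact: (hx nx).1 | exact: IHl].
have hS := G hs ha.
split=> //.
case: l IH hn hs ha hS => [|[[|z lz]] l] IH hn hs ha hS.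
- split; [apply: rho_1; exact: sig_eq_refl | apply: R_1; exact: sig_eq_refl].
  have hs' : sorted oge (ozero :: C [::] :: l) by apply/andP; split; [exact: oge0 | exact: hs].
  have ha' : allP (fun e => rho_rel (Xf e) (one_plus e) /\ inR (Xf e))
               (ozero :: C [::] :: l).
    split=> //; split; [apply: rho_1; exact: sig_eq_refl | apply: R_1; exact: sig_eq_refl].
  exact: G hs' ha'.
- exact: hS.
Qed.

Theorem lemma8p4 (B : Sig) (beta alpha : cnf) :
  inR B -> rho_rel B beta ->
  cnf_normal alpha -> olt alpha beta ->
  exists (A : Sig) (gamma : cnf),
    inR A /\ sig_le A B /\ rho_rel A gamma /\ cmp gamma alpha = Eq.
Proof.
move=> _ hB na lt.
have [_ [rA iA]] := RS na.
exists (S alpha), alpha; split=> //; split; last by split=> //; exact: cmp_refl.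
apply: sig_le_trans (claim hB).
apply: (@mono (maxn (h alpha) (h beta))) => //.
- exact: leq_maxl.
- exact: leq_maxr.
- by rewrite /olt in lt; rewrite lt.
Qed.
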